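(* Let $\alpha$ be a reduced operation sequence and $\lambda$ a push operation of $\alpha$. If the pop operations of $\alpha$ corresponding to $\lambda$ do not occupy a set of consecutive positions of $\alpha$ (i.e. they do not form a subword), then $\lambda$ is fixed.
   Context: Operation sequences: $\sigma[a]$ ($a\ge1$) denotes pushing the top $a$ elements of the input stack, as a block with relative order unchanged, onto the top of a working stack; $\tau[b]$ ($b\ge1$) denotes moving the top $b$ elements of the working stack, as a block with relative order unchanged, onto the top of an output stack; $\sigma=\sigma[1]$, $\tau=\tau[1]$. A well-formed operation sequence is a word $\alpha=\alpha_1\cdots\alpha_m$ in these symbols such that in every prefix the total push size is at least the total pop size, with equality for the whole word; its size $n$ is the total push size. Acting on an input stack containing $1,\dots,n$ with $1$ on top, it produces the permutation read from the final output stack top to bottom. Two well-formed sequences are equivalent if they have the same size and produce the same permutation. $\alpha$ is reduced if every consecutive pair $\alpha_i\alpha_{i+1}$ with $\alpha_i$ a push and $\alpha_{i+1}$ a pop equals $\sigma[1]\tau[1]$. The vertices of $\alpha$ are $v_0=(0,0)$ and $v_i=v_{i-1}+(a,a)$ if $\alpha_i=\sigma[a]$, $v_i=v_{i-1}+(b,-b)$ if $\alpha_i=\tau[b]$. The support of a push (resp. pop) is the set of elements it places on (resp. removes from) the working stack when $\alpha$ acts on input $1,\dots,n$. A push and a pop correspond if their supports intersect. An operation $\alpha_i$ of a reduced sequence $\alpha$ is fixed if for every reduced sequence $\beta=\beta_1\cdots\beta_{m'}$ equivalent to $\alpha$, with vertices $w_0,\dots,w_{m'}$, there is $j$ with $w_{j-1}=v_{i-1}$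 and $w_j=v_i$. *)

(* Defs.v *)
From mathcomp Require Import all_boot all_order all_algebra.
Set Implicit Arguments. Unset Strict Implicit. Unset Printing Implicit Defensive.

(* An operation: Push a = sigma[a], Pop b = tau[b]. *)
Inductive op := Push of nat | Pop of nat.

Definition is_push (o : op) : bool := if o is Push _ then true else false.
Definition is_pop (o : op) : bool := if o is Pop _ then true else false.
Definition push_size (o : op) : nat := if o is Push a then a else 0.
Definition pop_size (o : op) : nat := if o is Pop b then b else 0.
Definition op_size (o : op) : nat := match o with Push a => a | Pop b => b end.

Definition pushes (s : seq op) : nat := sumn (map push_size s).
Definition pops (s : seq op) : nat := sumn (map pop_size s).

Definition opsize (s : seq op) : nat := pushes s.

Definition well_formed (s : seq op) : Prop :=
  all (fun o => 0 < op_size o) s /\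
  (forall k, k <= size s -> pops (take k s) <= pushes (take k s)) /\
  pops s = pushes s.

(* states: (input stack, working stack, output stack), lists with head = top *)
Definition state := (seq nat * seq nat * seq nat)%type.

(* one step; second component = the block of elements moved (the support) *)
Definition step (st : state) (o : op) : state * seq nat :=
  let: (inp, w, out) := st in
  match o with
  | Push a => ((drop a inp, take a inp ++ w, out), take a inp)
  | Pop b => ((inp, drop b w, take b w ++ out), take b w)
  end.

Definition run (st : state) (s : seq op) : state :=
  foldl (fun st o => (step st o).1) st s.

Definition init_state (s : seq op) : state := (iota 1 (opsize s), [::], [::]).

(* the permutation produced: output stack read top to bottom *)
Definition produced (s : seq op) : seq nat := (run (init_state s) s).2.

Definition equivalent (s t : seq op) : Prop :=
  well_formed s /\ well_formed t /\ opsize s = opsize t /\ produced s = produced t.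

Definition reduced (s : seq op) : Prop :=
  forall k, k.+1 < size s ->
    is_push (nth (Pop 0) s k) -> is_pop (nth (Pop 0) s k.+1) ->
    nth (Pop 0) s k = Push 1 /\ nth (Pop 0) s k.+1 = Pop 1.

Definition vstep (v : nat * int) (o : op) : nat * int :=
  match o with
  | Push a => (v.1 + a, (v.2 + a%:Z)%R)
  | Pop b => (v.1 + b, (v.2 - b%:Z)%R)
  end.

Definition vertex (s : seq op) (k : nat) : nat * int :=
  foldl vstep (0, 0%R) (take k s).

Definition support (s : seq op) (i : nat) : seq nat :=
  (step (run (init_state s) (take i s)) (nth (Pop 0) s i)).2.

Definition corresponds (s : seq op) (i j : nat) : Prop :=
  is_push (nth (Pop 0) s i) /\ is_pop (nth (Pop 0) s j) /\ j < size s /\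
  exists x, x \in support s i /\ x \in support s j.

(* the operation at 0-based position i (i.e. alpha_{i+1}, from v_i to v_{i+1})
   is fixed *)
Definition fixed (s : seq op) (i : nat) : Prop :=
  forall t, reduced t -> equivalent s t ->
    exists j, j < size t /\ vertex t j = vertex s i /\ vertex t j.+1 = vertex s i.+1.

(* Main.v *)
Require Import Defs.
From mathcomp Require Import all_boot all_order all_algebra.
From mathcomp Require Import zify.
Set Implicit Arguments. Unset Strict Implicit. Unset Printing Implicit Defensive.

Definition stt (s : seq op) t : state := run (init_state s) (take t s).
Definition ipt s t := (stt s t).1.1.
Definition wkt s t := (stt s t).1.2.
Definition ott s t := (stt s t).2.
Definition pu s t := pushes (take t s).
Definition po s t := pops (take t s).

Lemma stt_succ s t : t < size s -> stt s t.+1 = (step (stt s t) (nth (Pop 0) s t)).1.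
Proof. by move=> H; rewrite /stt (take_nth (Pop 0) H) /run foldl_rcons. Qed.

Lemma pu_succ s t : t < size s -> pu s t.+1 = pu s t + push_size (nth (Pop 0) s t).
Proof. by move=> H; rewrite /pu (take_nth (Pop 0) H) /pushes -cats1 map_cat sumn_cat /= addn0. Qed.

Lemma po_succ s t : t < size s -> po s t.+1 = po s t + pop_size (nth (Pop 0) s t).
Proof. by move=> H; rewrite /po (take_nth (Pop 0) H) /pops -cats1 map_cat sumn_cat /= addn0. Qed.

Lemma step_push s t a : t < size s -> nth (Pop 0) s t = Push a ->
  [/\ ipt s t.+1 = drop a (ipt s t), wkt s t.+1 = take a (ipt s t) ++ wkt s t &
      ott s t.+1 = ott s t].
Proof.
move=> H E; rewrite /ipt /wkt /ott stt_succ // E.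
by case: (stt s t) => [[i w] o].
Qed.

Lemma step_pop s t b : t < size s -> nth (Pop 0) s t = Pop b ->
  [/\ ipt s t.+1 = ipt s t, wkt s t.+1 = drop b (wkt s t) &
      ott s t.+1 = take b (wkt s t) ++ ott s t].
Proof.
move=> H E; rewrite /ipt /wkt /ott stt_succ // E.
by case: (stt s t) => [[i w] o].
Qed.

Lemma pushes_take_le s t : pushes (take t s) <= pushes s.
Proof. by rewrite -{2}(cat_take_drop t s) /pushes map_cat sumn_cat leq_addr. Qed.

Lemma pu_mono s t1 t2 : t1 <= t2 -> pu s t1 <= pu s t2.
Proof.
move=> H; rewrite /pu -(subnKC H) takeD /pushes map_cat sumn_cat leq_addr //.
Qed.

Lemma pu_size s t : size s <= t -> pu s t = pushes s.
Proof. by move=> H; rewrite /pu take_oversize. Qed.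
Lemma po_size s t : size s <= t -> po s t = pops s.
Proof. by move=> H; rewrite /po take_oversize. Qed.

Lemma pu0 s : pu s 0 = 0. Proof. by rewrite /pu take0. Qed.
Lemma po0 s : po s 0 = 0. Proof. by rewrite /po take0. Qed.

Definition inv s t :=
  [/\ ipt s t = drop (pu s t) (iota 1 (opsize s)),
      uniq (wkt s t ++ ott s t),
      (forall z, (z \in wkt s t ++ ott s t) = (0 < z <= pu s t)),
      size (wkt s t) + po s t = pu s t &
      size (ott s t) = po s t].

Lemma inv_all s t : well_formed s -> t <= size s -> inv s t.
Proof.
move=> [Hsz [Hpre Htot]]; elim: t => [|t IH] Ht.
  rewrite /inv /ipt /wkt /ott /stt take0 /= pu0 po0 drop0; split => //.
  by move=> z; rewrite in_nil; lia.
have Ht' : t < size s by lia.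
have [Hi Hu Hm Hw Ho] := IH (ltnW Ht).
have Hpr := Hpre _ Ht.
have Hn : pu s t.+1 <= opsize s by rewrite /opsize; exact: pushes_take_le.
rewrite /pu /po in Hpr.
case E: (nth (Pop 0) s t) => [a|b].
- have [E1 E2 E3] := step_push Ht' E.
  have Hpu := pu_succ Ht'; rewrite E /= in Hpu.
  have Hpo := po_succ Ht'; rewrite E /= addn0 in Hpo.
  have Hblk : take a (ipt s t) = iota (pu s t).+1 a.
    rewrite Hi drop_iota take_iota add1n; congr iota; lia.
  rewrite /inv E1 E2 E3 Hblk Hi drop_drop Hpu Hpo; split.
  + by rewrite addnC.
  + rewrite -catA cat_uniq iota_uniq Hu /= andbT.
    apply/hasPn => z /=; rewrite Hm mem_iota; lia.
  + move=> z; rewrite -catA mem_cat Hm mem_iota; lia.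
  + rewrite size_cat size_iota; lia.
  + done.
- have [E1 E2 E3] := step_pop Ht' E.
  have Hpu := pu_succ Ht'; rewrite E /= addn0 in Hpu.
  have Hpo := po_succ Ht'; rewrite E /= in Hpo.
  rewrite /pu /po in Hpu Hpo.
  have Hb : b <= size (wkt s t) by rewrite /pu /po in Hw; lia.
  have Hp : perm_eq (wkt s t.+1 ++ ott s t.+1) (wkt s t ++ ott s t).
    rewrite E2 E3 catA perm_cat2r perm_catC cat_take_drop //.
  split.
  + by rewrite E1 Hi /pu Hpu.
  + by rewrite (perm_uniq Hp).
  + by move=> z; rewrite (perm_mem Hp) Hm /pu Hpu.
  + rewrite E2 size_drop /po /pu Hpu Hpo; rewrite /pu /po in Hw; lia.
  + rewrite E3 size_cat size_take_min /po Hpo; rewrite /po in Ho; lia.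
Qed.

Definition pidx s z := find (fun t => z <= pu s t.+1) (iota 0 (size s)).
Definition oidx s z := find (fun t => z \in ott s t.+1) (iota 0 (size s)).

Lemma find_iota_le (P : pred nat) m t : t < m -> P t -> find P (iota 0 m) <= t.
Proof.
move=> Ht Pt; rewrite leqNgt; apply/negP => H.
by have := before_find 0 H; rewrite nth_iota // add0n Pt.
Qed.

Lemma find_iota_P (P : pred nat) m : find P (iota 0 m) < m -> P (find P (iota 0 m)).
Proof.
move=> H; have Hs : find P (iota 0 m) < size (iota 0 m) by rewrite size_iota.
have Hh : has P (iota 0 m) by rewrite has_find.
have := nth_find 0 Hh.
by rewrite nth_iota // add0n.
Qed.

Lemma pidxP s z t : 0 < z <= pushes s -> t <= size s -> (z <= pu s t) = (pidx s z < t).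
Proof.
move=> Hz Ht; apply/idP/idP => H.
- case: t Ht H => [|t] Ht H; first by rewrite pu0 in H; lia.
  by rewrite ltnS; apply: find_iota_le.
- have Hf : pidx s z < size s by lia.
  have := find_iota_P Hf => /= H2.
  by apply: (leq_trans H2); apply: pu_mono.
Qed.

Lemma ott_mono s z t t' : z \in ott s t -> t <= t' -> t' <= size s -> z \in ott s t'.
Proof.
move=> Hz Htt'; elim: t' Htt' => [|t' IH] Htt' Ht'.
  have E : t = 0 by lia.
  by move: Hz; rewrite E.
case: (ltnP t t'.+1) => H; last first.
  have E : t = t'.+1 by lia.
  by move: Hz; rewrite E.
have Ht : t' < size s by lia.
have {}IH := IH H (ltnW Ht').
case E: (nth (Pop 0) s t') => [a|b].
- by have [_ _ ->] := step_push Ht E.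
- by have [_ _ ->] := step_pop Ht E; rewrite mem_cat IH orbT.
Qed.

Lemma ott0 s : ott s 0 = [::].
Proof. by rewrite /ott /stt take0. Qed.

Lemma oidxP s z t : t <= size s -> (z \in ott s t) = (oidx s z < t).
Proof.
move=> Ht; apply/idP/idP => H.
- case: t Ht H => [|t] Ht H; first by rewrite ott0 in H.
  by rewrite ltnS; apply: find_iota_le.
- have Hf : oidx s z < size s by lia.
  have := find_iota_P Hf => /= H2.
  exact: ott_mono H2 H Ht.
Qed.

Lemma uniq_mem_l (T : eqType) (a b : seq T) z :
  uniq (a ++ b) -> (z \in a) = (z \in a ++ b) && (z \notin b).
Proof.
rewrite cat_uniq => /and3P [_ /hasPn Hd _]; rewrite mem_cat.
case Ha: (z \in a) => //=; case Hb: (z \in b) => //=.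
by have := Hd z Hb; rewrite /= Ha.
Qed.


Lemma wk_mem s t z : well_formed s -> t <= size s -> 0 < z <= pushes s ->
  (z \in wkt s t) = (pidx s z < t) && (t <= oidx s z).
Proof.
move=> Hwf Ht Hz; have [_ Hu Hm _ _] := inv_all Hwf Ht.
rewrite (uniq_mem_l z Hu) Hm (oidxP z Ht) -(pidxP Hz Ht) -leqNgt.
by case/andP: Hz => -> _.
Qed.

Lemma pu_end s : pu s (size s) = pushes s.
Proof. by apply: pu_size. Qed.

Lemma pidx_lt s z : 0 < z <= pushes s -> pidx s z < size s.
Proof. by move=> Hz; rewrite -(pidxP Hz (leqnn _)) pu_end; case/andP: Hz. Qed.

Lemma pidx_bounds s z : 0 < z <= pushes s ->
  pu s (pidx s z) < z /\ z <= pu s (pidx s z).+1.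
Proof.
move=> Hz; have Hl := pidx_lt Hz.
have A := pidxP Hz (ltnW Hl); have B := pidxP Hz Hl; rewrite ltnn in A.
split; [by move/negbT: A; lia | by rewrite B].
Qed.

Lemma oidx_lt s z : well_formed s -> 0 < z <= pushes s -> oidx s z < size s.
Proof.
move=> Hwf Hz; have [_ Hu Hm Hw _] := inv_all Hwf (leqnn (size s)).
case: (Hwf) => _ [_ Htot].
rewrite pu_end po_size // -Htot in Hw.
have Hw0 : wkt s (size s) = [::].
  apply/size0nil; lia.
have := Hm z; rewrite Hw0 cat0s pu_end Hz => Hin.
by rewrite -(oidxP z (leqnn _)) Hin.
Qed.

Lemma pidx_push s z : 0 < z <= pushes s ->
  exists a, nth (Pop 0) s (pidx s z) = Push a.
Proof.
move=> Hz; have [H1 H2] := pidx_bounds Hz; have Hl := pidx_lt Hz.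
rewrite pu_succ // in H2.
case E: (nth (Pop 0) s (pidx s z)) => [a|b]; first by exists a.
by rewrite E /= in H2; lia.
Qed.

Lemma support_push s t a : nth (Pop 0) s t = Push a -> Defs.support s t = take a (ipt s t).
Proof. by move=> E; rewrite /Defs.support -/(stt s t) E /ipt; case: (stt s t) => [[i w] o]. Qed.

Lemma support_pop s t b : nth (Pop 0) s t = Pop b -> Defs.support s t = take b (wkt s t).
Proof. by move=> E; rewrite /Defs.support -/(stt s t) E /wkt; case: (stt s t) => [[i w] o]. Qed.

Lemma supp_push s t a z : well_formed s -> t < size s -> nth (Pop 0) s t = Push a ->
  (z \in Defs.support s t) = (0 < z <= pushes s) && (pidx s z == t).
Proof.
move=> Hwf Ht E; rewrite (support_push E).
have [Hi _ _ _ _] := inv_all Hwf (ltnW Ht).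
have Hpu := pu_succ Ht; rewrite E /= in Hpu.
have Hn : pu s t.+1 <= pushes s by apply: pushes_take_le.
rewrite Hi drop_iota take_iota mem_iota /opsize.
case Hz: (0 < z <= pushes s); last by apply/negbTE; move: Hz; lia.
rewrite /=.
have E1 := pidxP Hz (ltnW Ht); have E2 := pidxP Hz Ht.
apply/idP/idP => H.
- have Ha : z <= pu s t.+1 by lia.
  have Hb : ~~ (z <= pu s t) by lia.
  rewrite E2 in Ha; rewrite E1 in Hb; lia.
- have Ha : pidx s z < t.+1 by lia.
  have Hb : ~~ (pidx s z < t) by lia.
  rewrite -E2 in Ha; rewrite -E1 in Hb; lia.
Qed.

Lemma pop_le s t b : well_formed s -> t < size s -> nth (Pop 0) s t = Pop b ->
  b <= size (wkt s t).
Proof.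
move=> Hwf Ht E; have [_ _ _ Hw _] := inv_all Hwf (ltnW Ht).
case: (Hwf) => _ [Hpre _]; have := Hpre _ Ht.
have Hpu := pu_succ Ht; have Hpo := po_succ Ht; rewrite E /= addn0 in Hpu Hpo.
rewrite /pu /po in Hpu Hpo Hw; lia.
Qed.

Lemma supp_pop s t b z : well_formed s -> t < size s -> nth (Pop 0) s t = Pop b ->
  (z \in Defs.support s t) = (0 < z <= pushes s) && (oidx s z == t).
Proof.
move=> Hwf Ht E; rewrite (support_pop E).
have [E1 E2 E3] := step_pop Ht E.
have [_ Hu Hm _ _] := inv_all Hwf (ltnW Ht).
have Hn : pu s t <= pushes s by apply: pushes_take_le.
have Ho1 := oidxP z (ltnW Ht); have Ho2 := oidxP z (Ht : t.+1 <= size s).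
rewrite E3 in Ho2.
apply/idP/idP => H.
- have Hw : z \in wkt s t by apply: mem_take H.
  have Hz : 0 < z <= pu s t by rewrite -Hm mem_cat Hw.
  have Hz' : 0 < z <= pushes s by lia.
  rewrite Hz' /=; rewrite (wk_mem Hwf (ltnW Ht) Hz') in Hw.
  have : oidx s z < t.+1 by rewrite -Ho2 mem_cat H.
  lia.
- have Hlt : oidx s z < t.+1 by lia.
  have Hnl : ~~ (oidx s z < t) by lia.
  rewrite -Ho2 mem_cat in Hlt; rewrite -Ho1 in Hnl.
  by case/orP: Hlt => // Hin; rewrite Hin in Hnl.
Qed.

Lemma oidx_pop s z : well_formed s -> 0 < z <= pushes s ->
  (exists b, nth (Pop 0) s (oidx s z) = Pop b) /\ pidx s z < oidx s z.
Proof.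
move=> Hwf Hz; have Hl := oidx_lt Hwf Hz.
have H1 := oidxP z Hl; have H2 := oidxP z (ltnW Hl).
rewrite ltnSn in H1; rewrite ltnn in H2.
case E: (nth (Pop 0) s (oidx s z)) => [a|b].
- have [_ _ E3] := step_push Hl E; by rewrite E3 H2 in H1.
- split; first by exists b.
  have := supp_pop z Hwf Hl E; rewrite Hz eqxx (support_pop E) => Hin.
  have Hw : z \in wkt s (oidx s z) by apply: mem_take Hin.
  by rewrite (wk_mem Hwf (ltnW Hl) Hz) in Hw; case/andP: Hw.
Qed.

Lemma pairwise_iota (r : rel nat) k a :
  (forall u v, k <= u -> u < v -> v < k + a -> r u v) -> pairwise r (iota k a).
Proof.
elim: a k => [|a IH] k H //=.
apply/andP; split.
- apply/allP => v; rewrite mem_iota => Hv; apply: H; lia.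
- apply: IH => u v H1 H2 H3; apply: H; lia.
Qed.

Definition aboveb s u v := (pidx s v < pidx s u) || ((pidx s u == pidx s v) && (u < v)).
Definition beforeb s u v := (oidx s v < oidx s u) || ((oidx s u == oidx s v) && aboveb s u v).

Lemma wk_pair s t : well_formed s -> t <= size s -> pairwise (aboveb s) (wkt s t).
Proof.
move=> Hwf; elim: t => [|t IH] Ht.
  by rewrite /wkt /stt take0.
have Ht' : t < size s by lia.
have {}IH := IH (ltnW Ht).
have [Hi _ Hm _ _] := inv_all Hwf (ltnW Ht').
case E: (nth (Pop 0) s t) => [a|b].
- have [_ E2 _] := step_push Ht' E; rewrite E2.
  have Hsupp := supp_push _ Hwf Ht' E; rewrite (support_push E) in Hsupp.
  rewrite pairwise_cat IH andbT; apply/andP; split.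
  + apply/allrelP => u v Hu Hv.
    rewrite Hsupp in Hu; case/andP: Hu => Hu1 /eqP Hu2.
    have Hvz : 0 < v <= pu s t by rewrite -Hm mem_cat Hv.
    have Hn : pu s t <= pushes s by apply: pushes_take_le.
    have Hv' : 0 < v <= pushes s by lia.
    rewrite (wk_mem Hwf (ltnW Ht') Hv') in Hv.
    rewrite /aboveb; lia.
  + have Hpu := pu_succ Ht'; rewrite E /= in Hpu.
    have Hn : pu s t.+1 <= pushes s by apply: pushes_take_le.
    rewrite Hi drop_iota take_iota /opsize; apply: pairwise_iota => u v H1 H2 H3.
    have Hu : u \in take a (ipt s t).
      by rewrite Hi drop_iota take_iota mem_iota /opsize; lia.
    have Hv : v \in take a (ipt s t).
      by rewrite Hi drop_iota take_iota mem_iota /opsize; lia.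
    rewrite Hsupp in Hu; rewrite Hsupp in Hv.
    rewrite /aboveb; lia.
- have [_ E2 _] := step_pop Ht' E; rewrite E2.
  by move: IH; rewrite -{1}(cat_take_drop b (wkt s t)) pairwise_cat => /and3P [].
Qed.

Lemma ot_pair s t : well_formed s -> t <= size s -> pairwise (beforeb s) (ott s t).
Proof.
move=> Hwf; elim: t => [|t IH] Ht.
  by rewrite ott0.
have Ht' : t < size s by lia.
have {}IH := IH (ltnW Ht).
case E: (nth (Pop 0) s t) => [a|b].
- by have [_ _ ->] := step_push Ht' E.
- have [_ _ E3] := step_pop Ht' E; rewrite E3.
  have Hsupp := supp_pop _ Hwf Ht' E; rewrite (support_pop E) in Hsupp.
  rewrite pairwise_cat IH andbT; apply/andP; split.
  + apply/allrelP => u v Hu Hv.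
    rewrite Hsupp in Hu; case/andP: Hu => Hu1 /eqP Hu2.
    rewrite (oidxP v (ltnW Ht')) in Hv.
    rewrite /beforeb; lia.
  + have Hw := wk_pair Hwf (ltnW Ht').
    move: Hw; rewrite -{1}(cat_take_drop b (wkt s t)) pairwise_cat => /and3P [_ Hw _].
    apply: (sub_in_pairwise (P := fun z => oidx s z == t)) Hw.
    * move=> u v /eqP Hu /eqP Hv Hab; rewrite /beforeb Hu Hv eqxx ltnn /=; exact Hab.
    * apply/allP => z Hz; rewrite Hsupp in Hz; by case/andP: Hz.
Qed.

Lemma stack_disc s u v : well_formed s -> 0 < u <= pushes s -> 0 < v <= pushes s ->
  aboveb s u v -> pidx s u < oidx s v -> oidx s u <= oidx s v.
Proof.
move=> Hwf Hu Hv Hab Hpo.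
case: (ltnP (oidx s u) (oidx s v)) => [/ltnW //|Hge].
set t := oidx s v.
have Hl := oidx_lt Hwf Hv.
have [[b Eb] Hpv] := oidx_pop Hwf Hv.
have Hvs : v \in take b (wkt s t) by rewrite -(support_pop Eb) (supp_pop _ Hwf Hl Eb) Hv eqxx.
have Hus : u \in wkt s t by rewrite (wk_mem Hwf (ltnW Hl) Hu); apply/andP; split.
have Hvw : v \in wkt s t by apply: mem_take Hvs.
have Hneq : u != v by apply/negP => /eqP E; rewrite E /aboveb in Hab; lia.
have Hidx : index u (wkt s t) < index v (wkt s t).
  case: (ltngtP (index u (wkt s t)) (index v (wkt s t))) => // H.
  - have := wk_pair Hwf (ltnW Hl); move/(pairwiseP 0) => /(_ (index v (wkt s t)) (index u (wkt s t))).
    rewrite !inE !index_mem Hus Hvw !nth_index // => /(_ isT isT H).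
    by rewrite /aboveb in Hab *; lia.
  - have : nth 0 (wkt s t) (index u (wkt s t)) = nth 0 (wkt s t) (index v (wkt s t)) by rewrite H.
    by rewrite !nth_index // => E; rewrite E eqxx in Hneq.
have Hut : u \in take b (wkt s t).
  rewrite in_take //; rewrite in_take // in Hvs; lia.
have := supp_pop u Hwf Hl Eb; rewrite (support_pop Eb) Hut Hu /= => /esym /eqP ->.
done.
Qed.

Lemma produced_ott s : produced s = ott s (size s).
Proof. by rewrite /produced /ott /stt take_size. Qed.

Lemma in_produced s z : well_formed s -> 0 < z <= pushes s -> z \in produced s.
Proof.
move=> Hwf Hz; rewrite produced_ott (oidxP z (leqnn _)); exact: oidx_lt.
Qed.

Lemma ord_index s u v : well_formed s -> 0 < u <= pushes s -> 0 < v <= pushes s ->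
  beforeb s u v -> index u (produced s) < index v (produced s).
Proof.
move=> Hwf Hu Hv Hb.
have Hu' := in_produced Hwf Hu; have Hv' := in_produced Hwf Hv.
have Hneq : u != v by apply/negP => /eqP E; rewrite E /beforeb /aboveb in Hb; lia.
case: (ltngtP (index u (produced s)) (index v (produced s))) => // H.
- have := ot_pair Hwf (leqnn (size s)); rewrite -produced_ott.
  move/(pairwiseP 0) => /(_ (index v (produced s)) (index u (produced s))).
  rewrite !inE !index_mem Hu' Hv' !nth_index // => /(_ isT isT H).
  by rewrite /beforeb /aboveb in Hb *; lia.
- have : nth 0 (produced s) (index u (produced s)) = nth 0 (produced s) (index v (produced s)) by rewrite H.
  by rewrite !nth_index // => E; rewrite E eqxx in Hneq.
Qed.

Lemma index_ord s u v : well_formed s -> u \in produced s -> v \in produced s ->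
  index u (produced s) < index v (produced s) -> beforeb s u v.
Proof.
move=> Hwf Hu Hv H.
have := ot_pair Hwf (leqnn (size s)); rewrite -produced_ott.
move/(pairwiseP 0) => /(_ (index u (produced s)) (index v (produced s))).
by rewrite !inE !index_mem Hu Hv !nth_index // => /(_ isT isT H).
Qed.

Lemma transfer s1 s2 u v : equivalent s1 s2 -> 0 < u <= pushes s1 -> 0 < v <= pushes s1 ->
  beforeb s1 u v -> beforeb s2 u v.
Proof.
move=> [Hw1 [Hw2 [Hn Hp]]] Hu Hv Hb.
have H := ord_index Hw1 Hu Hv Hb.
rewrite Hp in H; apply: index_ord => //.
- by rewrite -Hp; apply: in_produced.
- by rewrite -Hp; apply: in_produced.
Qed.

Lemma foldl_vstep c d l :
  foldl vstep (c, d) l = (c + pushes l + pops l, (d + (pushes l)%:Z - (pops l)%:Z)%R).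
Proof.
elim: l c d => [|o l IH] c d /=.
  by rewrite /pushes /pops /= !addn0 GRing.addr0 GRing.subr0.
case: o => [a|b] /=; rewrite IH /pushes /pops /=; congr pair.
- lia.
- rewrite !PoszD; lia.
- lia.
- rewrite !PoszD; lia.
Qed.

Lemma vertexE s k : vertex s k = (pu s k + po s k, ((pu s k)%:Z - (po s k)%:Z)%R).
Proof. by rewrite /vertex foldl_vstep /pu /po GRing.add0r. Qed.

Lemma size_le1_eq (T : eqType) (l : seq T) a b : size l <= 1 -> a \in l -> b \in l -> a = b.
Proof. by case: l => [|x [|y l]] //= _; rewrite !inE => /eqP -> /eqP ->. Qed.

Lemma is_push_pop o : is_push o = ~~ is_pop o.
Proof. by case: o. Qed.

Lemma first_pop s t y j : well_formed s -> reduced s -> t < size s -> 0 < y ->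
  y.+1 <= pushes s -> pidx s y = t -> pidx s y.+1 = t -> t < j -> j < size s ->
  is_pop (nth (Pop 0) s j) ->
  exists F d, t.+1 < F /\ F < size s /\ is_pop (nth (Pop 0) s F) /\
    (forall t', t < t' < F -> is_push (nth (Pop 0) s t')) /\
    0 < d <= pushes s /\ pidx s d = F.-1 /\ oidx s d = F /\
    (forall z, 0 < z <= pushes s -> oidx s z = F -> z = d).
Proof.
move=> Hwf Hred Ht Hy Hy1 Hpy Hpy1 Htj Hjs Hj.
pose P F := (t < F) && is_pop (nth (Pop 0) s F) && (F < size s).
have HP : exists F, P F by exists j; rewrite /P Htj Hj Hjs.
case: (ex_minnP HP) => F HPF Hmin.
move: HPF; rewrite /P => /andP [/andP [HtF HpF] HFs].
have Hpush : forall t', t < t' < F -> is_push (nth (Pop 0) s t').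
  move=> t' Ht'; rewrite is_push_pop; apply/negP => Hp.
  have := Hmin t'; rewrite /P Hp /=; lia.
have Hyb := pidx_bounds (_ : 0 < y <= pushes s).
have Hy1b := pidx_bounds (_ : 0 < y.+1 <= pushes s).
have Hy' : 0 < y <= pushes s by lia.
have Hy1' : 0 < y.+1 <= pushes s by lia.
have [B1 B2] := Hyb Hy'; have [C1 C2] := Hy1b Hy1'.
rewrite Hpy in B1 B2; rewrite Hpy1 in C1 C2.
have [a0 Eat] := pidx_push Hy'; rewrite Hpy in Eat.
have HF2 : t.+1 < F.
  case: (ltngtP t.+1 F) => // H; first lia.
  have := Hred t; rewrite H HFs Eat HpF => /(_ isT isT isT) [E1 _].
  have := pu_succ Ht; rewrite Eat E1 /= => E2; lia.
have HF1 : F.-1 < size s by lia.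
have HpF1 : is_push (nth (Pop 0) s F.-1) by apply: Hpush; lia.
have := Hred F.-1; rewrite (_ : F.-1.+1 = F); last by lia.
move=> /(_ HFs HpF1 HpF) [E1 E2].
have HpuF : pu s F = pu s F.-1 + 1.
  by have := pu_succ HF1; rewrite E1 (_ : F.-1.+1 = F) //; lia.
set d := pu s F.
have Hd : 0 < d <= pushes s by rewrite /d; have := pushes_take_le s F; rewrite /pu in HpuF *; lia.
have Hpd : pidx s d = F.-1.
  have A := pidxP Hd (ltnW HF1); have B := pidxP Hd (ltnW HFs).
  have : d <= pu s F by [].
  rewrite B => H1.
  have : ~~ (d <= pu s F.-1) by rewrite /d; lia.
  rewrite A => H2; lia.
have Hle := pop_le Hwf HFs E2.
have Hsz : size (take 1 (wkt s F)) = 1 by rewrite size_take_min; lia.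
have Hsupp := supp_pop _ Hwf HFs E2; rewrite (support_pop E2) in Hsupp.
have Huniq : forall z, 0 < z <= pushes s -> oidx s z = F -> z \in take 1 (wkt s F).
  by move=> z Hz Hoz; rewrite Hsupp Hz Hoz eqxx.
pose u := nth 0 (take 1 (wkt s F)) 0.
have Hu : u \in take 1 (wkt s F) by apply: mem_nth; rewrite Hsz.
have := Hu; rewrite Hsupp => /andP [Hur /eqP Huo].
have Hod : oidx s d = F.
  have [_ Hpo] := oidx_pop Hwf Hur.
  rewrite Huo in Hpo.
  case: (ltngtP (pidx s u) F.-1) => Hpu; last first.
  - have [U1 U2] := pidx_bounds Hur; rewrite Hpu in U1 U2.
    have -> : d = u by rewrite /d; rewrite (_ : F.-1.+1 = F) in U2; lia.
    exact: Huo.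
  - lia.
  - have Hab : aboveb s d u by rewrite /aboveb Hpd Hpu.
    have := stack_disc Hwf Hd Hur Hab; rewrite Hpd Huo => /(_ (ltac:(lia))) H1.
    have [_ H2] := oidx_pop Hwf Hd; rewrite Hpd in H2; lia.
exists F, d; do 7 (split => //).
move=> z Hz Hoz; apply: (size_le1_eq (l := take 1 (wkt s F))); first by rewrite Hsz.
- exact: Huniq.
- exact: Huniq.
Qed.

Lemma pidx_mono s u v : 0 < u -> v <= pushes s -> u <= v -> pidx s u <= pidx s v.
Proof.
move=> Hu Hv Huv.
have Hv' : 0 < v <= pushes s by lia.
have [_ B] := pidx_bounds Hv'.
have Hu' : 0 < u <= pushes s by lia.
have Hl := pidx_lt Hv'.
have : u <= pu s (pidx s v).+1 by lia.
rewrite (pidxP Hu' Hl); lia.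
Qed.

Lemma p_ne_o s u v : well_formed s -> 0 < u <= pushes s -> 0 < v <= pushes s ->
  pidx s u <> oidx s v.
Proof.
move=> Hwf Hu Hv E.
have [a Ea] := pidx_push Hu; have [[b Eb] _] := oidx_pop Hwf Hv.
by rewrite E Eb in Ea.
Qed.

Lemma p_lt_o s z : well_formed s -> 0 < z <= pushes s -> pidx s z < oidx s z.
Proof. by move=> Hwf Hz; have [_ ->] := oidx_pop Hwf Hz. Qed.

Lemma op_pos s t : well_formed s -> t < size s -> 0 < op_size (nth (Pop 0) s t).
Proof.
move=> [Hall _] Ht; by move/(all_nthP (Pop 0)): Hall => /(_ t Ht).
Qed.

Lemma before_asym s u v : beforeb s u v -> beforeb s v u -> False.
Proof. rewrite /beforeb /aboveb; lia. Qed.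

Lemma sandwich s u w v : well_formed s -> 0 < u -> v <= pushes s -> u < w -> w < v ->
  pidx s u = pidx s v -> oidx s u = oidx s v -> beforeb s w v.
Proof.
move=> Hwf Hu Hv Huw Hwv Hp Ho.
have Hpw1 := pidx_mono (s := s) Hu (_ : w <= pushes s) (ltnW Huw).
have Hpw2 := pidx_mono (s := s) (_ : 0 < w) Hv (ltnW Hwv).
have Hw : 0 < w <= pushes s by lia.
have Hu' : 0 < u <= pushes s by lia.
have Hv' : 0 < v <= pushes s by lia.
have {Hpw1}Hpw1 := Hpw1 ltac:(lia); have {Hpw2}Hpw2 := Hpw2 ltac:(lia).
have Hpw : pidx s w = pidx s u by lia.
have H1 := stack_disc Hwf Hu' Hw (_ : aboveb s u w).
have H2 := stack_disc Hwf Hw Hv' (_ : aboveb s w v).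
have Pw := p_lt_o Hwf Hw; have Pv := p_lt_o Hwf Hv'.
have {H1}H1 := H1 ltac:(rewrite /aboveb; lia) ltac:(lia).
have {H2}H2 := H2 ltac:(rewrite /aboveb; lia) ltac:(lia).
rewrite /beforeb /aboveb; lia.
Qed.

Lemma ivt (f : nat -> nat) a c k : f a < k -> k <= f c -> a <= c ->
  exists y, [/\ a <= y, y < c, f y < k & k <= f y.+1].
Proof.
move=> Ha Hc; elim: c Hc => [|c IH] Hc Hac.
  have E : a = 0 by lia.
  by rewrite E in Ha; lia.
case E: (a == c.+1).
  by move/eqP: E => E; rewrite E in Ha; lia.
have Hac' : a <= c by move/negbT: E; lia.
case: (ltnP (f c) k) => Hfc.
- by exists c; split => //.
- have [y [H1 H2 H3 H4]] := IH Hfc Hac'; exists y; split => //; lia.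
Qed.

Lemma equiv_sym s1 s2 : equivalent s1 s2 -> equivalent s2 s1.
Proof. by move=> [H1 [H2 [H3 H4]]]; do 3 (split => //). Qed.

Lemma po_count s t : well_formed s -> t <= size s ->
  po s t = count (fun z => oidx s z < t) (iota 1 (pushes s)).
Proof.
move=> Hwf Ht; have [_ Hu Hm _ Ho] := inv_all Hwf Ht.
rewrite -Ho -size_filter; apply: perm_size; apply: uniq_perm.
- by move: Hu; rewrite cat_uniq => /and3P [].
- by apply: filter_uniq; apply: iota_uniq.
- move=> z; rewrite mem_filter mem_iota (oidxP z Ht).
  have Hn : pu s t <= pushes s by apply: pushes_take_le.
  case Hz: (oidx s z < t) => //=.
  have : z \in ott s t by rewrite (oidxP z Ht).
  move=> Hin; have := Hm z; rewrite mem_cat Hin orbT => /esym H; lia.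
Qed.

Lemma push1pop1 s F : well_formed s -> 0 < F -> F < size s ->
  nth (Pop 0) s F.-1 = Push 1 -> nth (Pop 0) s F = Pop 1 ->
  let d := pu s F in
  0 < d <= pushes s /\ pidx s d = F.-1 /\ oidx s d = F /\
    (forall z, 0 < z <= pushes s -> oidx s z = F -> z = d).
Proof.
move=> Hwf HF0 HFs E1 E2 d.
have HF1 : F.-1 < size s by lia.
have HpuF : pu s F = pu s F.-1 + 1.
  by have := pu_succ HF1; rewrite E1 (_ : F.-1.+1 = F) //; lia.
have Hd : 0 < d <= pushes s by rewrite /d; have := pushes_take_le s F; rewrite /pu in HpuF *; lia.
have Hpd : pidx s d = F.-1.
  have A := pidxP Hd (ltnW HF1); have B := pidxP Hd (ltnW HFs).
  have : d <= pu s F by [].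
  rewrite B => H1.
  have : ~~ (d <= pu s F.-1) by rewrite /d; lia.
  rewrite A => H2; lia.
have Hle := pop_le Hwf HFs E2.
have Hsz : size (take 1 (wkt s F)) = 1 by rewrite size_take_min; lia.
have Hsupp := supp_pop _ Hwf HFs E2; rewrite (support_pop E2) in Hsupp.
have Huniq : forall z, 0 < z <= pushes s -> oidx s z = F -> z \in take 1 (wkt s F).
  by move=> z Hz Hoz; rewrite Hsupp Hz Hoz eqxx.
pose u := nth 0 (take 1 (wkt s F)) 0.
have Hu : u \in take 1 (wkt s F) by apply: mem_nth; rewrite Hsz.
have := Hu; rewrite Hsupp => /andP [Hur /eqP Huo].
have Hod : oidx s d = F.
  have [_ Hpo] := oidx_pop Hwf Hur.
  rewrite Huo in Hpo.
  case: (ltngtP (pidx s u) F.-1) => Hpu; last first.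
  - have [U1 U2] := pidx_bounds Hur; rewrite Hpu in U1 U2.
    have -> : d = u by rewrite /d; rewrite (_ : F.-1.+1 = F) in U2; lia.
    exact: Huo.
  - lia.
  - have Hab : aboveb s d u by rewrite /aboveb Hpd Hpu.
    have := stack_disc Hwf Hd Hur Hab; rewrite Hpd Huo => /(_ (ltac:(lia))) H1.
    have [_ H2] := oidx_pop Hwf Hd; rewrite Hpd in H2; lia.
do 3 (split => //).
move=> z Hz Hoz; apply: (size_le1_eq (l := take 1 (wkt s F))); first by rewrite Hsz.
- exact: Huniq.
- exact: Huniq.
Qed.

Lemma corr_elim s i j a : well_formed s -> i < size s -> nth (Pop 0) s i = Push a ->
  corresponds s i j ->
  exists z, 0 < z <= pushes s /\ pidx s z = i /\ oidx s z = j /\ j < size s.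
Proof.
move=> Hwf Hi Ea [_ [Hpj [Hjs [z [Hzi Hzj]]]]].
case Ej: (nth (Pop 0) s j) => [c|b]; first by rewrite Ej in Hpj.
rewrite (supp_push z Hwf Hi Ea) in Hzi; rewrite (supp_pop z Hwf Hjs Ej) in Hzj.
case/andP: Hzi => Hz /eqP Hpz; case/andP: Hzj => _ /eqP Hoz.
by exists z.
Qed.

Lemma corr_intro s i z : well_formed s -> i < size s -> is_push (nth (Pop 0) s i) ->
  0 < z <= pushes s -> pidx s z = i -> corresponds s i (oidx s z).
Proof.
move=> Hwf Hi Hpi Hz Hpz.
have Hl := oidx_lt Hwf Hz; have [[b Eb] _] := oidx_pop Hwf Hz.
case Ea: (nth (Pop 0) s i) => [a|c]; last by rewrite Ea in Hpi.
split => //; split; first by rewrite Eb.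
split => //; exists z; split.
- by rewrite (supp_push z Hwf Hi Ea) Hz Hpz eqxx.
- by rewrite (supp_pop z Hwf Hl Eb) Hz eqxx.
Qed.

Lemma pidx_lt_inv s u v : 0 < v -> u <= pushes s -> pidx s u < pidx s v -> u < v.
Proof.
move=> Hv Hu H; rewrite ltnNge; apply/negP => Hvu.
have := pidx_mono (s := s) Hv Hu Hvu; lia.
Qed.

Inductive Bf (s : seq op) (u v : nat) : Prop := mkBf of beforeb s u v.

Lemma BfE s u v : Bf s u v -> oidx s v < oidx s u \/ (oidx s u = oidx s v /\
  (pidx s v < pidx s u \/ (pidx s u = pidx s v /\ u < v))).
Proof. move=> [H]; move: H; rewrite /beforeb /aboveb; lia. Qed.

Lemma bf_lt s u v : oidx s v < oidx s u -> Bf s u v.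
Proof. by move=> H; constructor; rewrite /beforeb H. Qed.

Lemma Bf_asym s u v : Bf s u v -> Bf s v u -> False.
Proof. by move=> [H1] [H2]; apply: before_asym H1 H2. Qed.

Lemma transferBf s1 s2 u v : equivalent s1 s2 -> 0 < u <= pushes s1 -> 0 < v <= pushes s1 ->
  Bf s1 u v -> Bf s2 u v.
Proof. by move=> He Hu Hv [H]; constructor; apply: transfer He Hu Hv H. Qed.

Lemma sandwichBf s u w v : well_formed s -> 0 < u -> v <= pushes s -> u < w -> w < v ->
  pidx s u = pidx s v -> oidx s u = oidx s v -> Bf s w v.
Proof. move=> Hwf Hu Hv H1 H2 H3 H4; constructor; exact: (sandwich Hwf Hu Hv H1 H2 H3 H4). Qed.

Lemma Bf_mk s u v : oidx s v < oidx s u \/ (oidx s u = oidx s v /\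
  (pidx s v < pidx s u \/ (pidx s u = pidx s v /\ u < v))) -> Bf s u v.
Proof. move=> H; constructor; rewrite /beforeb /aboveb; lia. Qed.

Unset Implicit Arguments.
Theorem mainTheorem10 (alpha : seq op) (i : nat) :
  well_formed alpha -> reduced alpha ->
  i < size alpha -> is_push (nth (Pop 0) alpha i) ->
  (exists j1 k j2, j1 < k < j2 /\
     corresponds alpha i j1 /\ corresponds alpha i j2 /\ ~ corresponds alpha i k) ->
  fixed alpha i.
Proof.
move=> Hwa Hra Hi Hpi [j1 [k [j2 [Hk [C1 [C2 NC]]]]]] beta Hrb Heq.
have Hwb : well_formed beta by case: Heq => _ [].
have Hnn : pushes beta = pushes alpha by case: Heq => _ [_ [H _]]; rewrite /opsize in H.
have R : forall z, 0 < z <= pushes alpha -> 0 < z <= pushes beta by rewrite Hnn.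
have Heq' := equiv_sym Heq.
case Ea: (nth (Pop 0) alpha i) => [a|c]; last by rewrite Ea in Hpi.
have [z1 [Hz1 [Hpz1 [Hoz1 Hj1s]]]] := corr_elim Hwa Hi Ea C1.
have [z2 [Hz2 [Hpz2 [Hoz2 Hj2s]]]] := corr_elim Hwa Hi Ea C2.
have Hz12 : z1 <= z2.
  rewrite leqNgt; apply/negP => H.
  have Hab : aboveb alpha z2 z1 by rewrite /aboveb Hpz1 Hpz2 eqxx H orbT.
  have := stack_disc Hwa Hz2 Hz1 Hab; have := p_lt_o Hwa Hz1; lia.
have [y [Hy1 Hy2 Hy3 Hy4]] := @ivt (oidx alpha) z1 z2 k (ltac:(lia) : oidx alpha z1 < k)
  (ltac:(lia) : k <= oidx alpha z2) Hz12.
have Hy : 0 < y <= pushes alpha by lia.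
have HyS : 0 < y.+1 <= pushes alpha by lia.
have Hpy : pidx alpha y = i.
  have := pidx_mono (s := alpha) (ltac:(lia) : 0 < z1) (ltac:(lia) : y <= pushes alpha) Hy1.
  have := pidx_mono (s := alpha) (ltac:(lia) : 0 < y) (ltac:(lia) : z2 <= pushes alpha) (ltnW Hy2).
  lia.
have HpyS : pidx alpha y.+1 = i.
  have := pidx_mono (s := alpha) (ltac:(lia) : 0 < z1) (ltac:(lia) : y.+1 <= pushes alpha) (ltnW (leq_ltn_trans Hy1 (ltnSn y))).
  have := pidx_mono (s := alpha) (ltac:(lia) : 0 < y.+1) (ltac:(lia) : z2 <= pushes alpha) Hy2.
  lia.
have HoyS : k < oidx alpha y.+1.
  case: (ltngtP k (oidx alpha y.+1)) => // E; first lia.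
  by exfalso; apply: NC; rewrite E; apply: corr_intro.
set jA := oidx alpha y in Hy3 *.
set jB := oidx alpha y.+1 in HoyS *.
have Hij : i < jA by rewrite -Hpy; apply: p_lt_o.
have HjAs : jA < size alpha by apply: oidx_lt.
have HjBs : jB < size alpha by apply: oidx_lt.
have [[bA EbA] _] := oidx_pop Hwa Hy.
set x := pu alpha i.
set X := pu alpha i.+1.
have HxX : forall z, 0 < z <= pushes alpha -> (pidx alpha z == i) = (x < z <= X).
  move=> z Hz; have A := pidxP Hz (ltnW Hi); have B := pidxP Hz Hi.
  apply/idP/idP => H.
  - move/eqP: H => H; rewrite H ltnn in A; rewrite H ltnSn in B.
    move/negbT: A; rewrite /x /X; lia.
  - have B' : pidx alpha z < i.+1 by rewrite -B; lia.
    have A' : ~~ (pidx alpha z < i) by rewrite -A; lia.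
    lia.
have Hxy : x < y <= X by rewrite -HxX // Hpy.
have HxyS : x < y.+1 <= X by rewrite -HxX // HpyS.
have [f [e0 [Hf1 [Hfs [Hfpop [Hfpush [He0 [Hpe0 [Hoe0 Hfu]]]]]]]]] :=
  first_pop Hwa Hra Hi (ltac:(lia) : 0 < y) (ltac:(lia) : y.+1 <= pushes alpha) Hpy HpyS Hij HjAs
    (ltac:(by rewrite EbA) : is_pop (nth (Pop 0) alpha jA)).
have HfA : f < jA.
  case: (ltngtP f jA) => // E.
  - have := Hfpush jA; rewrite EbA; move=> /(_ ltac:(lia)) //.
  - have E' := Hfu y Hy (esym E).
    rewrite E' Hpe0 in Hpy; lia.
have Hi1s : i.+1 < size alpha by lia.
have Hpi1 : is_push (nth (Pop 0) alpha i.+1) by apply: Hfpush; lia.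
case Ea1: (nth (Pop 0) alpha i.+1) => [a1|c1]; last by rewrite Ea1 in Hpi1.
have Ha1 : 0 < a1 by have := op_pos Hwa Hi1s; rewrite Ea1.
have Hpu2 : pu alpha i.+2 = X + a1 by rewrite (pu_succ Hi1s) Ea1.
have Hpu2n : pu alpha i.+2 <= pushes alpha by apply: pushes_take_le.
set w := X.+1.
have Hw : 0 < w <= pushes alpha by rewrite /w; lia.
have Hpw : pidx alpha w = i.+1.
  have A := pidxP Hw (ltnW Hi1s); have B := pidxP Hw (ltac:(lia) : i.+2 <= size alpha).
  have B' : pidx alpha w < i.+2 by rewrite -B; lia.
  have A' : ~~ (pidx alpha w < i.+1) by rewrite -A /w /X; lia.
  lia.
have How : oidx alpha w <= jA.
  apply: stack_disc => //; first by rewrite /aboveb Hpw Hpy; lia.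
  rewrite Hpw; lia.
have HjB1 : jA < jB.-1 by lia.
have HjB1s : jB.-1 < size alpha by lia.
have [g [Hg Hog]] : exists g, 0 < g <= pushes alpha /\ oidx alpha g = jB.-1.
  case EB1: (nth (Pop 0) alpha jB.-1) => [a2|b2].
  - exfalso.
    have [[bB EbB] _] := oidx_pop Hwa HyS.
    have [E1 E2] : nth (Pop 0) alpha jB.-1 = Push 1 /\ nth (Pop 0) alpha jB = Pop 1.
      have := Hra jB.-1; rewrite (_ : jB.-1.+1 = jB); last by lia.
      apply => //; [by rewrite EB1 | by rewrite EbB].
    have [_ [Hpd [Hod Hu]]] := push1pop1 Hwa (ltac:(lia) : 0 < jB) HjBs E1 E2.
    have := Hu y.+1 HyS erefl => E3.
    rewrite -E3 HpyS in Hpd; lia.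
  - have Hb2 : 0 < b2 by have := op_pos Hwa HjB1s; rewrite EB1.
    have Hle := pop_le Hwa HjB1s EB1.
    have Hsz : size (take b2 (wkt alpha jB.-1)) = b2 by rewrite size_take_min; lia.
    pose g := nth 0 (take b2 (wkt alpha jB.-1)) 0.
    have Hgin : g \in Defs.support alpha jB.-1 by rewrite (support_pop EB1); apply: mem_nth; rewrite Hsz.
    rewrite (supp_pop g Hwa HjB1s EB1) in Hgin.
    case/andP: Hgin => Hg /eqP Hog; by exists g.
have Hpoy : pidx alpha y < oidx alpha y by apply: p_lt_o.
have HigB : i < pidx alpha g.
  case: (ltngtP (pidx alpha g) i) => H //.
  - have := stack_disc Hwa HyS Hg (ltac:(rewrite /aboveb; lia) : aboveb alpha y.+1 g).
    rewrite HpyS Hog => /(_ ltac:(lia)); lia.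
  - case: (ltngtP g y) => H2.
    + have := stack_disc Hwa Hg Hy (ltac:(rewrite /aboveb; lia) : aboveb alpha g y).
      rewrite H => /(_ ltac:(lia)); lia.
    + case: (ltngtP g y.+1) => H3; first lia.
      * have := stack_disc Hwa HyS Hg (ltac:(rewrite /aboveb; lia) : aboveb alpha y.+1 g).
        rewrite HpyS Hog => /(_ ltac:(lia)); lia.
      * rewrite H3 in Hog; lia.
    + rewrite H2 in Hog; lia.
have HgA : jA < pidx alpha g.
  have Hne := p_ne_o Hwa Hg Hy.
  case: (ltngtP (pidx alpha g) jA) => H //.
  have := stack_disc Hwa Hg Hy (ltac:(rewrite /aboveb; lia) : aboveb alpha g y).
  move=> /(_ ltac:(lia)); lia.
have Hgw : w < g by apply: (pidx_lt_inv (s := alpha)); lia.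
have Hye0 : y.+1 < e0 by apply: (pidx_lt_inv (s := alpha)); lia.
have Hx1 : 0 < x.+1 <= pushes alpha by lia.
have Hpx1 : pidx alpha x.+1 = i by apply/eqP; rewrite HxX //; lia.
have Hox1 : oidx alpha x.+1 <= jA.
  case: (ltngtP x.+1 y) => H; last by rewrite H.
  - apply: stack_disc => //; first by rewrite /aboveb Hpx1 Hpy; lia.
    rewrite Hpx1; lia.
  - lia.
have HXr : 0 < X <= pushes alpha by lia.
have HpX : pidx alpha X = i by apply/eqP; rewrite HxX //; lia.
have HXe0 : X < e0 by apply: (pidx_lt_inv (s := alpha)); lia.
have HoX : jB <= oidx alpha X.
  case: (ltngtP y.+1 X) => H; last by rewrite -H.
  - apply: stack_disc => //; first by rewrite /aboveb HpX HpyS; lia.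
    rewrite HpyS; have := p_lt_o Hwa HXr; lia.
  - lia.
clear Hpi Hfpop Hpi1 C1 C2 NC.
have A1 : Bf alpha y.+1 y by apply: bf_lt; lia.
have A2 : Bf alpha g y by apply: bf_lt; lia.
have A3 : Bf alpha y.+1 g by apply: bf_lt; lia.
have A4 : Bf alpha g w by apply: bf_lt; lia.
have A5 : Bf alpha y e0 by apply: bf_lt; lia.
have A8 : Bf alpha g x.+1 by apply: bf_lt; lia.
have A9 : Bf alpha X y by apply: bf_lt; lia.
have A10 : Bf alpha X g by apply: bf_lt; lia.
have B1 := transferBf Heq HyS Hy A1.
have B2 := transferBf Heq Hg Hy A2.
have B3 := transferBf Heq HyS Hg A3.
have B4 := transferBf Heq Hg Hw A4.
have B5 := transferBf Heq Hy He0 A5.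
have B8 := transferBf Heq Hg Hx1 A8.
have B9 := transferBf Heq HXr Hy A9.
have B10 := transferBf Heq HXr Hg A10.
clear A1 A2 A3 A4 A5 A8 A9 A10.
have Hgb := R _ Hg; have Hyb := R _ Hy; have HySb := R _ HyS; have He0b := R _ He0.
have Hwb' := R _ Hw; have Hx1b := R _ Hx1; have HXb := R _ HXr.
have G1 : oidx beta g < oidx beta y.+1.
  case: (ltnP (oidx beta g) (oidx beta y.+1)) => // Hge.
  exfalso.
  have Hm := pidx_mono (s := beta) (ltac:(lia) : 0 < y.+1) (ltac:(lia) : g <= pushes beta) (ltac:(lia) : y.+1 <= g).
  have [Hp Ho] : pidx beta y.+1 = pidx beta g /\ oidx beta y.+1 = oidx beta g.
    by have := BfE B3; lia.
  have H := sandwichBf Hwb (ltac:(lia) : 0 < y.+1) (ltac:(lia) : g <= pushes beta) (ltac:(rewrite /w; lia) : y.+1 < w) Hgw Hp Ho.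
  exact: Bf_asym H B4.
have S1 : pidx beta y = pidx beta y.+1.
  have Hm := pidx_mono (s := beta) (ltac:(lia) : 0 < y) (ltac:(lia) : y.+1 <= pushes beta) (ltac:(lia) : y <= y.+1).
  case: (ltngtP (pidx beta y) (pidx beta y.+1)) => H //; last lia.
  exfalso.
  case: (ltnP (pidx beta y.+1) (oidx beta y)) => H2.
  - have := stack_disc Hwb HySb Hyb (ltac:(rewrite /aboveb; lia) : aboveb beta y.+1 y) H2.
    have := BfE B1; have := BfE B2; lia.
  - have Hne := p_ne_o Hwb HySb Hyb.
    have Hme := pidx_mono (s := beta) (ltac:(lia) : 0 < y.+1) (ltac:(lia) : e0 <= pushes beta) (ltac:(lia) : y.+1 <= e0).
    have Hpe := p_lt_o Hwb He0b.
    have := BfE B5; lia.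
set b := pidx beta y in S1 *.
have Hbd : pidx beta y = b by [].
have S2 : oidx beta y < oidx beta y.+1 by have := BfE B1; lia.
have Hme := pidx_mono (s := beta) (ltac:(lia) : 0 < y.+1) (ltac:(lia) : e0 <= pushes beta) (ltac:(lia) : y.+1 <= e0).
have Hpe := p_lt_o Hwb He0b.
have [S3a S3b] : b < pidx beta e0 /\ oidx beta e0 < oidx beta y.
  case: (ltngtP b (pidx beta e0)) => H.
  - by split => //; have := BfE B5; lia.
  - lia.
  - exfalso.
    have := stack_disc Hwb HySb He0b (ltac:(rewrite /aboveb; lia) : aboveb beta y.+1 e0) (ltac:(lia)).
    have := BfE B5; lia.
have Hpyo : b < oidx beta y by apply: p_lt_o.
have Hbs : b < size beta by apply: pidx_lt.
have Hoys : oidx beta y < size beta by apply: oidx_lt.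
have Hmg := pidx_mono (s := beta) (ltac:(lia) : 0 < y) (ltac:(lia) : g <= pushes beta) (ltac:(lia) : y <= g).
have S4 : forall z, 0 < z <= x -> pidx beta z < b.
  move=> z Hz.
  have Hzr : 0 < z <= pushes alpha by lia.
  have Hzb := R _ Hzr.
  have Hm := pidx_mono (s := beta) (ltac:(lia) : 0 < z) (ltac:(lia) : y <= pushes beta) (ltac:(lia) : z <= y).
  case: (ltngtP (pidx beta z) b) => H //; first lia.
  exfalso.
  have Hpz : pidx alpha z < i by rewrite -(pidxP Hzr (ltnW Hi)); lia.
  have Hne := p_ne_o Hwa Hy Hzr.
  have Hpzo := p_lt_o Hwb Hzb.
  case: (ltngtP (oidx alpha z) i) => Hoz; last by rewrite Hpy in Hne; lia.
  - have [[bY EbY] _] := oidx_pop Hwb Hyb.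
    have [F [d [HF1 [HFs [HFpop [HFpush [Hd [Hpd [Hod Hdu]]]]]]]]] :=
      first_pop Hwb Hrb Hbs (ltac:(lia) : 0 < y) (ltac:(lia) : y.+1 <= pushes beta)
        (erefl : pidx beta y = b) (esym S1) Hpyo Hoys (ltac:(by rewrite EbY) : is_pop (nth (Pop 0) beta (oidx beta y))).
    clear HFpop.
    have HzF : F <= oidx beta z.
      rewrite leqNgt; apply/negP => HzF.
      have [[bz Ebz] _] := oidx_pop Hwb Hzb.
      by have := HFpush (oidx beta z) (ltac:(lia)); rewrite Ebz.
    have HzF' : F < oidx beta z.
      case: (ltngtP F (oidx beta z)) HzF => // E _.
      have E2 := Hdu z Hzb (esym E); rewrite E2 in H; lia.
    have Hzd : Bf beta z d by apply: bf_lt; lia.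
    have Hda : 0 < d <= pushes alpha by rewrite -Hnn.
    have := BfE (transferBf Heq' Hzb Hd Hzd) => Hzd'.
    have Hpdo := p_lt_o Hwa Hda.
    have Hdx : d <= x by rewrite (pidxP Hda (ltnW Hi)); lia.
    have Hyd : y.+1 < d by apply: (pidx_lt_inv (s := beta)); lia.
    lia.
  - have := stack_disc Hwa HyS Hzr (ltac:(rewrite /aboveb; lia) : aboveb alpha y.+1 z) (ltac:(lia)).
    move=> HoyZ.
    have B7 := BfE (transferBf Heq Hzr Hg (bf_lt (ltac:(lia) : oidx alpha g < oidx alpha z))).
    have := stack_disc Hwb Hzb Hyb (ltac:(rewrite /aboveb; lia) : aboveb beta z y) (ltac:(lia)).
    have := BfE B2; lia.
have S5a : forall z, 0 < z <= pushes alpha -> oidx alpha z < i -> oidx beta z < b.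
  move=> z Hz Hoz; have Hzb := R _ Hz.
  have Hpz := p_lt_o Hwa Hz.
  have Hzx : z <= x by rewrite (pidxP Hz (ltnW Hi)); lia.
  have HPz := S4 z (ltac:(lia)).
  case: (ltnP (oidx beta z) b) => // Hge; exfalso.
  have Hne := p_ne_o Hwb Hyb Hzb.
  have B6 := BfE (transferBf Heq He0 Hz (bf_lt (ltac:(lia) : oidx alpha z < oidx alpha e0))).
  have := stack_disc Hwb Hyb Hzb (ltac:(rewrite /aboveb; lia) : aboveb beta y z) (ltac:(lia)).
  lia.
have S5b : forall z, 0 < z <= pushes alpha -> oidx beta z < b -> oidx alpha z < i.
  move=> z Hz HQz; have Hzb := R _ Hz.
  case: (ltnP (oidx alpha z) i) => // Hge; exfalso.
  have Hne := p_ne_o Hwa Hy Hz.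
  have Hzf : f <= oidx alpha z.
    rewrite leqNgt; apply/negP => Hzf.
    have [[bz Ebz] _] := oidx_pop Hwa Hz.
    by have := Hfpush (oidx alpha z) (ltac:(lia)); rewrite Ebz.
  case: (ltngtP f (oidx alpha z)) Hzf => // E _.
  - have B6 := BfE (transferBf Heq Hz He0 (bf_lt (ltac:(lia) : oidx alpha e0 < oidx alpha z))).
    lia.
  - have E2 := Hfu z Hz (esym E); rewrite E2 in HQz; lia.
have S6 : pidx beta x.+1 = b.
  have Hm := pidx_mono (s := beta) (ltac:(lia) : 0 < x.+1) (ltac:(lia) : y <= pushes beta) (ltac:(lia) : x.+1 <= y).
  case: (ltngtP (pidx beta x.+1) b) => H //; last lia.
  exfalso.
  have Hox1' := p_lt_o Hwa Hx1.
  have HQ : ~ (oidx beta x.+1 < b) by move=> H2; have := S5b _ Hx1 H2; lia.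
  have Hne := p_ne_o Hwb Hyb Hx1b.
  have := stack_disc Hwb HySb Hx1b (ltac:(rewrite /aboveb; lia) : aboveb beta y.+1 x.+1) (ltac:(lia)).
  move=> H3.
  have H4 : Bf beta x.+1 g by apply: bf_lt; lia.
  exact: Bf_asym H4 B8.
have S7a : b < pidx beta w.
  have Hm := pidx_mono (s := beta) (ltac:(lia) : 0 < y.+1) (ltac:(lia) : w <= pushes beta) (ltac:(rewrite /w; lia) : y.+1 <= w).
  case: (ltngtP b (pidx beta w)) => H //; first lia.
  exfalso.
  have Hpw' := p_lt_o Hwb Hwb'.
  have Hyw : y.+1 < w by rewrite /w; lia.
  have := stack_disc Hwb HySb Hwb' (ltac:(rewrite /aboveb; lia) : aboveb beta y.+1 w) (ltac:(lia)).
  move=> H3.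
  have H4 : Bf beta w g by apply: bf_lt; lia.
  exact: Bf_asym H4 B4.
have S7b : pidx beta X = b.
  have Hm := pidx_mono (s := beta) (ltac:(lia) : 0 < y.+1) (ltac:(lia) : X <= pushes beta) (ltac:(lia) : y.+1 <= X).
  have Hm2 := pidx_mono (s := beta) (ltac:(lia) : 0 < X) (ltac:(lia) : e0 <= pushes beta) (ltac:(lia) : X <= e0).
  have Hm3 := pidx_mono (s := beta) (ltac:(lia) : 0 < X) (ltac:(lia) : g <= pushes beta) (ltac:(lia) : X <= g).
  case: (ltngtP b (pidx beta X)) => H //; last lia.
  exfalso.
  have := stack_disc Hwb HXb Hyb (ltac:(rewrite /aboveb; lia) : aboveb beta X y) (ltac:(lia)).
  move=> H3.
  have [Hp Ho] : pidx beta X = pidx beta g /\ oidx beta X = oidx beta g.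
    by have := BfE B9; have := BfE B10; have := BfE B2; lia.
  have H4 := sandwichBf Hwb (ltac:(lia) : 0 < X) (ltac:(lia) : g <= pushes beta) (ltac:(rewrite /w; lia) : X < w) Hgw Hp Ho.
  exact: Bf_asym H4 B4.
have [aB EaB] := pidx_push Hyb; rewrite Hbd in EaB.
have Hpub : pu beta b = x.
  have A := pidxP Hx1b (ltnW Hbs); rewrite S6 ltnn in A.
  case: (posnP x) => Hx0.
  - move/negbT: A; rewrite Hx0; lia.
  - have Hxr : 0 < x <= pushes beta by lia.
    have B := pidxP Hxr (ltnW Hbs); rewrite S4 in B; last lia.
    move/negbT: A; lia.
have Hpub1 : pu beta b.+1 = X.
  have A := pidxP HXb Hbs; rewrite S7b ltnSn in A.
  have B := pidxP Hwb' Hbs.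
  have B' : ~~ (pidx beta w < b.+1) by lia.
  rewrite -B in B'; rewrite /w in B'; lia.
have Hpob : po beta b = po alpha i.
  rewrite (po_count Hwb (ltnW Hbs)) (po_count Hwa (ltnW Hi)) Hnn.
  apply: eq_in_count => z; rewrite mem_iota => Hz.
  have Hz' : 0 < z <= pushes alpha by lia.
  apply/idP/idP; [exact: S5b | exact: S5a].
have Hpob1 : po beta b.+1 = po beta b by rewrite (po_succ Hbs) EaB addn0.
have Hpoa1 : po alpha i.+1 = po alpha i by rewrite (po_succ Hi) Ea addn0.
exists b; split => //.
rewrite !vertexE Hpub Hpub1 Hpob1 Hpob Hpoa1.
by split.
Qed.
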